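(* Let $G=(g_1,\dots,g_k)\in\mathbb{N}_0^k$ be telescopic with $g_1>0$ and $c(G)=(c_2,\dots,c_k)$. Suppose that for some $n\in\{1,\dots,k\}$, $g_n$ is an $\mathbb{N}_0$-linear combination of the entries $g_i$, $i\ne n$. Then either $g_n\in\langle g_1,\dots,g_{n-1}\rangle$ (interpreted as $\{0\}$ when $n=1$), or $g_n=c_mg_m$ for some $m$ with $n<m\le k$.
   Context: For $G=(g_1,\dots,g_k)\in\mathbb{N}_0^k$, $\langle\cdot\rangle$ denotes the set of $\mathbb{N}_0$-linear combinations. Let $G_i=(g_1,\dots,g_i)$, $d_i=\gcd(G_i)$, and (assuming $g_1>0$) $c(G)=(c_2,\dots,c_k)$ with $c_j=d_{j-1}/d_j$. $G$ is telescopic if $c_jg_j\in\langle G_{j-1}\rangle$ for all $2\le j\le k$. *)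

(* Defs.v *)
(* A tuple G = (g_1,...,g_k) is a sequence gs : seq nat with k = size gs;
   entries are 1-indexed: g_i = nth 0 gs (i-1). *)
From mathcomp Require Import all_boot.
Set Implicit Arguments. Unset Strict Implicit. Unset Printing Implicit Defensive.

Definition in_semigroup (s : seq nat) (x : nat) : Prop :=
  exists a : nat -> nat, x = \sum_(i < size s) a i * nth 0 s i.

Definition gen (gs : seq nat) (i : nat) : nat := nth 0 gs i.-1.

Definition gprefix (gs : seq nat) (i : nat) : seq nat := take i gs.

Definition dgcd (gs : seq nat) (i : nat) : nat := \big[gcdn/0]_(x <- gprefix gs i) x.

Definition cseq (gs : seq nat) (j : nat) : nat := dgcd gs j.-1 %/ dgcd gs j.

Definition telescopic (gs : seq nat) : Prop :=
  forall j, 2 <= j <= size gs -> in_semigroup (gprefix gs j.-1) (cseq gs j * gen gs j).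

(* Main.v *)
Require Import Defs.
From mathcomp Require Import all_boot.
From mathcomp Require Import zify.

Lemma big_gcd_dvd (s : seq nat) x : x \in s -> \big[gcdn/0]_(y <- s) y %| x.
Proof.
elim: s => //= y s IH; rewrite in_cons big_cons => /orP[/eqP->|/IH H].
  exact: dvdn_gcdl.
exact: dvdn_trans (dvdn_gcdr _ _) H.
Qed.

Lemma dgcdS gs M : M < size gs -> dgcd gs M.+1 = gcdn (dgcd gs M) (nth 0 gs M).
Proof. by move=> H; rewrite /dgcd /gprefix (take_nth 0 H) -cats1 big_cat big_seq1. Qed.

Lemma ind_sum n' x M :
  \sum_(i < M) (if i == n' :> nat then x else 0) = if n' < M then x else 0.
Proof.
elim: M => [|M IH]; first by rewrite big_ord0.
rewrite big_ord_recr /= IH.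
do 2 case: ifP; case: ifP; case: eqP => /=; lia.
Qed.

Lemma widen_sum (v a : nat -> nat) M N : M <= N ->
  \sum_(i < M) a i * v i = \sum_(i < N) (if i < M then a i else 0) * v i.
Proof.
move=> H; rewrite (big_ord_widen _ (fun i => a i * v i) H) big_mkcond.
by apply: eq_bigr => i _; case: ifP.
Qed.

Lemma main_ind gs n' (Ht : telescopic gs) (Hn : n' < size gs)
  (Hpos : 0 < nth 0 gs n') M :
  M <= size gs -> forall a, a n' = 0 ->
  nth 0 gs n' = \sum_(i < M) a i * nth 0 gs i ->
  in_semigroup (take n' gs) (nth 0 gs n') \/
  (exists m, n' < m /\ m.+1 <= size gs /\
     nth 0 gs n' = cseq gs m.+1 * nth 0 gs m).
Proof.
elim: M => [|M IH] HM a Ha0 Hsum.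
  by move: Hpos; rewrite Hsum big_ord0.
case: (ltngtP M n') => HMn.
- left; exists (fun i => if i < M.+1 then a i else 0).
  rewrite size_take Hn Hsum (@widen_sum _ _ M.+1 n' HMn).
  by apply: eq_bigr => i _; rewrite nth_take.
- move: Hsum; rewrite big_ord_recr /=.
  set S := \sum_(i < M) _.
  have HM' : M < size gs by [].
  case: (posnP (a M * nth 0 gs M)) => HaM Hsum.
    by apply: (IH (ltnW HM) a Ha0); rewrite Hsum HaM addn0.
  have aMp : 0 < a M by move: HaM; rewrite muln_gt0 => /andP[].
  have vMp : 0 < nth 0 gs M by move: HaM; rewrite muln_gt0 => /andP[].
  have [b Hb] : in_semigroup (gprefix gs M) (cseq gs M.+1 * gen gs M.+1).
    by apply: Ht; rewrite HM andbT; case: M HMn {IH HM HM' Hsum S HaM aMp vMp}.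
  move: Hb; rewrite /gen /= /gprefix size_take HM' => Hb.
  have Hb' : cseq gs M.+1 * nth 0 gs M = \sum_(i < M) b i * nth 0 gs i.
    by rewrite Hb; apply: eq_bigr => i _; rewrite nth_take.
  clear Hb.
  set D := dgcd gs M.
  set d := gcdn D (nth 0 gs M).
  have Hc : cseq gs M.+1 = D %/ d by rewrite /cseq /= dgcdS.
  have Dv : forall i, i < M -> D %| nth 0 gs i.
    move=> i Hi; apply: big_gcd_dvd; rewrite -(nth_take 0 Hi); apply: mem_nth.
    by rewrite size_take HM'.
  have DS : D %| S by apply: dvdn_sum => i _; apply: dvdn_mull; apply: Dv.
  have DaM : D %| a M * nth 0 gs M.
    by rewrite -(dvdn_addr _ DS) -Hsum; apply: Dv.
  have Dad : D %| a M * d.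
    by rewrite /d muln_gcdr dvdn_gcd DaM andbT dvdn_mull.
  have dp : 0 < d by rewrite /d gcdn_gt0 vMp orbT.
  set c := cseq gs M.+1.
  have cd : D = c * d by rewrite /c Hc divnK // /d dvdn_gcdl.
  have caM : c %| a M by rewrite -(dvdn_pmul2r dp) -cd.
  set k := a M %/ c.
  have aMk : a M = k * c by rewrite /k divnK.
  have kp : 0 < k by move: aMp; rewrite aMk muln_gt0 => /andP[].
  set b' := fun i => if i == n' :> nat then 0 else b i.
  have Hsplit : \sum_(i < M) b i * nth 0 gs i =
      b n' * nth 0 gs n' + \sum_(i < M) b' i * nth 0 gs i.
    have := ind_sum n' (b n' * nth 0 gs n') M; rewrite HMn => <-; rewrite -big_split /=.
    apply: eq_bigr => i _; rewrite /b'; case: eqP => [->|_] //.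
    by rewrite mul0n addn0.
  case: (posnP (b n')) => Hbn.
  + apply: (IH (ltnW HM) (fun i => a i + k * b' i)).
      by rewrite /= Ha0 /b' eqxx muln0.
    rewrite {1}Hsum aMk -mulnA Hb' Hsplit Hbn mul0n add0n.
    rewrite big_distrr /= /S -big_split /=.
    by apply: eq_bigr => i _; rewrite mulnDl mulnA.
  + right; exists M; split => //; split => //.
    apply/eqP; rewrite eqn_leq; apply/andP; split.
      rewrite Hb' Hsplit; apply: leq_trans (leq_addr _ _).
      exact: leq_pmull.
    rewrite [leqRHS]Hsum aMk -mulnA; apply: leq_trans (leq_addl _ _).
    exact: leq_pmull.
- subst M; move: Hsum; rewrite big_ord_recr /= Ha0 mul0n addn0 => Hsum.
  exact: (IH (ltnW HM) a Ha0).
Qed.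

Theorem mainTheorem4 (gs : seq nat) (n : nat) :
  telescopic gs ->
  0 < gen gs 1 ->
  1 <= n <= size gs ->
  (* g_n is an N_0-linear combination of the g_i, i <> n *)
  (exists a : nat -> nat,
      gen gs n = \sum_(i < size gs | i.+1 != n) a i * nth 0 gs i) ->
  in_semigroup (gprefix gs n.-1) (gen gs n) \/
  (exists m, n < m <= size gs /\ gen gs n = cseq gs m * gen gs m).
Proof.
move=> Ht _; case: n => // n' /= Hn [a Ha].
case: (posnP (gen gs n'.+1)) => Hg.
  by left; exists (fun _ => 0); rewrite Hg big1.
have Ha0 : (fun i => if i == n' then 0 else a i) n' = 0 by rewrite /= eqxx.
have Hs : nth 0 gs n' = \sum_(i < size gs) (fun i => if i == n' then 0 else a i) i * nth 0 gs i.
  rewrite /gen /= in Ha Hg *; rewrite Ha big_mkcond /=.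
  by apply: eq_bigr => i _; rewrite eqSS; case: eqP => // _; rewrite mul0n.
have [H|[m [H1 [H2 H3]]]] := @main_ind gs n' Ht Hn Hg _ (leqnn (size gs)) (fun i => if i == n' then 0 else a i) Ha0 Hs.
- by left.
- by right; exists m.+1; rewrite ltnS H1 H2.
Qed.
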